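(* The subdivision construction is functorial: for every functor $f:C\to D$ between small categories, $Sd(f):Sd(C)\to Sd(D)$ as described below is a well-defined functor (independent of the choices of representatives and right inverses), $Sd(\mathrm{id}_C)=\mathrm{id}_{Sd(C)}$, and $Sd(g\circ f)=Sd(g)\circ Sd(f)$ for all functors $f:C\to D$, $g:D\to E$.
   Context: For a small category $C$: a $q$-simplex of the nerve $NC$ is a functor $X:[q]\to C$ ($[q]=\{0<\dots<q\}$), i.e. a chain of arrows $f_i:X_{i-1}\to X_i$, $1\le i\le q$; $q_X=q$. It is non-degenerate if no $f_i$ is an identity. $\Delta/C$ has all simplices as objects and as morphisms $X\to Y$ the order-preserving $\xi:[q_X]\to[q_Y]$ with $Y\circ\xi=X$, written $\xi_*$. For a $q$-simplex $X$ and surjective order-preserving $s:[q+1]\to[q]$ with order-preserving right inverses $d,d'$, the morphisms $d_*,d'_*:X\to X\circ s$ are elementary equivalent; $\sim$ is the smallest equivalence relation on morphisms of $\Delta/C$ compatible with composition containing these pairs; $[\Delta/C]$ is the quotient category with morphisms the classes $[\xi_*]$; $Sd(C)$ is its full subcategory on the non-degenerate simplices. For a simplex $X=(f_1,\dots,f_q)$, let $r(X)$ be the non-degenerate simplex obtained by deleting all identity arrows among the $f_i$, of dimension $p_X$ = number of non-identity $f_i$, and let $\alpha_X:[q_X]\to[p_X]$ be the surjective order-preserving map with $\alpha_X(i-1)=\alpha_X(i)$ iff $f_i$ is an identity, so $X=r(X)\circ\alpha_X$. For a functor $f:C\to D$, $Sd(f)$ sends an object $X$ of $Sd(C)$ to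 $r(f\circ X)$, and a morphism $[\xi_*]:X\to Y$ to $[(\alpha_{f\circ Y}\circ\xi\circ\sigma)_*]:r(f\circ X)\to r(f\circ Y)$, where $\sigma$ is an order-preserving right inverse of $\alpha_{f\circ X}$. *)

(* Defs.v *)
From Stdlib Require Import ClassicalEpsilon.
From mathcomp Require Import all_boot.

Set Implicit Arguments.
Unset Strict Implicit.
Unset Printing Implicit Defensive.

(* comp g f is g o f, meaningful when tgt f = src g.                         *)
Record Cat := MkCat {
  Ob : Type;
  Arr : Type;
  src : Arr -> Ob;
  tgt : Arr -> Ob;
  idc : Ob -> Arr;
  comp : Arr -> Arr -> Arr;
  src_id : forall a, src (idc a) = a;
  tgt_id : forall a, tgt (idc a) = a;
  src_comp : forall g f, tgt f = src g -> src (comp g f) = src f;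
  tgt_comp : forall g f, tgt f = src g -> tgt (comp g f) = tgt g;
  comp_id_r : forall f, comp f (idc (src f)) = f;
  comp_id_l : forall f, comp (idc (tgt f)) f = f;
  comp_assoc : forall h g f, tgt f = src g -> tgt g = src h ->
    comp h (comp g f) = comp (comp h g) f
}.

Record Functor (C D : Cat) := MkFunctor {
  fob : Ob C -> Ob D;
  farr : Arr C -> Arr D;
  f_src : forall f, src (farr f) = fob (src f);
  f_tgt : forall f, tgt (farr f) = fob (tgt f);
  f_id : forall a, farr (idc a) = idc (fob a);
  f_comp : forall g f, tgt f = src g -> farr (comp g f) = comp (farr g) (farr f)
}.

Definition Fid (C : Cat) : Functor C C :=
  @MkFunctor C C (fun a => a) (fun f => f)
    (fun _ => erefl) (fun _ => erefl) (fun _ => erefl) (fun _ _ _ => erefl).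

Definition Fcomp (C D E : Cat) (G : Functor D E) (F : Functor C D) : Functor C E.
Proof.
refine (@MkFunctor C E (fun a => fob G (fob F a)) (fun f => farr G (farr F f))
  _ _ _ _).
- by move=> f; rewrite f_src f_src.
- by move=> f; rewrite f_tgt f_tgt.
- by move=> a; rewrite f_id f_id.
- move=> g f H; rewrite f_comp // f_comp //.
  by rewrite f_tgt f_src H.
Defined.

(* Simplices of the nerve: a q-simplex is a chain of q composable arrows     *)
(* f_1, ..., f_q (f_i = nth (i-1)), together with its initial vertex X_0     *)
(* (needed when q = 0).  Raw data + validity predicate.                      *)
Record Simplex (C : Cat) := Smp { sv0 : Ob C; sarr : seq (Arr C) }.

Fixpoint chain (C : Cat) (a : Ob C) (s : seq (Arr C)) : Prop :=
  match s with
  | [::] => True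
  | f :: s' => src f = a /\ chain (tgt f) s'
  end.

Definition is_simplex (C : Cat) (X : Simplex C) : Prop := chain (sv0 X) (sarr X).

Definition dim (C : Cat) (X : Simplex C) : nat := size (sarr X).

Definition is_id (C : Cat) (f : Arr C) : Prop := exists a, f = idc a.

Definition nondeg (C : Cat) (X : Simplex C) : Prop :=
  is_simplex X /\ forall f, List.In f (sarr X) -> ~ is_id f.

(* f_i  (1 <= i <= q_X) *)
Definition arrow (C : Cat) (X : Simplex C) (i : nat) : Arr C :=
  nth (idc (sv0 X)) (sarr X) i.-1.

Definition vertex (C : Cat) (X : Simplex C) (i : nat) : Ob C :=
  if i is _.+1 then tgt (arrow X i) else sv0 X.

Fixpoint span_aux (C : Cat) (X : Simplex C) (a k : nat) : Arr C :=
  match k with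
  | 0 => idc (vertex X a)
  | k'.+1 => comp (arrow X (a + k)) (span_aux X a k')
  end.

Definition span (C : Cat) (X : Simplex C) (a b : nat) : Arr C :=
  span_aux X a (b - a).

(* X o xi, for xi : [p] -> [q_X] order preserving *)
Definition sprec (C : Cat) (X : Simplex C) (xi : nat -> nat) (p : nat) : Simplex C :=
  Smp (vertex X (xi 0)) [seq span X (xi i) (xi i.+1) | i <- iota 0 p].

Definition ordmap (p q : nat) (xi : nat -> nat) : Prop :=
  (forall i j, i <= j -> j <= p -> xi i <= xi j) /\ (forall i, i <= p -> xi i <= q).

(* xi_star : X -> Y is a morphism of Delta/C (xi is only relevant on [q_X]) *)
Definition is_mor (C : Cat) (X Y : Simplex C) (xi : nat -> nat) : Prop :=
  [/\ is_simplex X, is_simplex Y, ordmap (dim X) (dim Y) xi & sprec Y xi (dim X) = X].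

(* The relation ~ on morphisms of Delta/C: the smallest equivalence relation *)
(* on parallel morphisms, compatible with composition, containing the        *)
(* elementary equivalences (d_star, d'_star): X -> X o s. Two representing       *)
(* functions which agree on [q_X] denote the same morphism (sim_ext).        *)
Inductive sim (C : Cat) : Simplex C -> Simplex C -> (nat -> nat) -> (nat -> nat) -> Prop :=
| sim_ext X Y xi xi' :
    is_mor X Y xi -> (forall i, i <= dim X -> xi i = xi' i) -> sim X Y xi xi'
| sim_elem X s d d' :
    is_simplex X ->
    ordmap (dim X).+1 (dim X) s ->
    (forall j, j <= dim X -> exists2 i, i <= (dim X).+1 & s i = j) ->
    ordmap (dim X) (dim X).+1 d -> (forall j, j <= dim X -> s (d j) = j) ->
    ordmap (dim X) (dim X).+1 d' -> (forall j, j <= dim X -> s (d' j) = j) ->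
    sim X (sprec X s (dim X).+1) d d'
| sim_sym X Y xi xi' : sim X Y xi xi' -> sim X Y xi' xi
| sim_trans X Y xi1 xi2 xi3 : sim X Y xi1 xi2 -> sim X Y xi2 xi3 -> sim X Y xi1 xi3
| sim_postcomp X Y Z xi xi' eta :
    sim X Y xi xi' -> is_mor Y Z eta -> sim X Z (eta \o xi) (eta \o xi')
| sim_precomp W X Y eta xi xi' :
    is_mor W X eta -> sim X Y xi xi' -> sim W Y (xi \o eta) (xi' \o eta).

Definition idb (C : Cat) (f : Arr C) : bool :=
  if excluded_middle_informative (is_id f) then true else false.

Definition rS (C : Cat) (X : Simplex C) : Simplex C :=
  Smp (sv0 X) [seq f <- sarr X | ~~ idb f].

Definition alpha (C : Cat) (X : Simplex C) (i : nat) : nat :=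
  count (fun f => ~~ idb f) (take i (sarr X)).

Definition fmapS (C D : Cat) (F : Functor C D) (X : Simplex C) : Simplex D :=
  Smp (fob F (sv0 X)) (map (farr F) (sarr X)).

Definition sd_section (C D : Cat) (F : Functor C D) (X : Simplex C) (sg : nat -> nat) : Prop :=
  ordmap (dim (rS (fmapS F X))) (dim X) sg /\
  forall j, j <= dim (rS (fmapS F X)) -> alpha (fmapS F X) (sg j) = j.

(* Sd(F)[xi_star] = [(alpha_{F o Y} o xi o sg)_star] : r(F o X) -> r(F o Y) *)
Definition SdMor (C D : Cat) (F : Functor C D) (Y : Simplex C)
  (xi sg : nat -> nat) : nat -> nat :=
  fun j => alpha (fmapS F Y) (xi (sg j)).

(* Main.v *)
Require Import Defs.
From mathcomp Require Import all_boot zify.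
From Stdlib Require Import Classical ClassicalEpsilon.
Notation cmp := (@Defs.comp _).
Set Implicit Arguments. Unset Strict Implicit. Unset Printing Implicit Defensive.

Lemma chainP (C : Cat) (s : seq (Arr C)) (a : Ob C) (x0 : Arr C) :
  chain a s <-> forall i, i < size s ->
     src (nth x0 s i) = (if i is j.+1 then tgt (nth x0 s j) else a).
Proof.
elim: s a => [|f s IH] a /=; first by split => // _ i.
rewrite IH; split.
- case=> E H [|i] //= Hi; have := H i Hi; by case: i {Hi}.
- move=> H; split; first exact: (H 0).
  move=> i Hi; have := H i.+1 Hi; by case: i {Hi}.
Qed.

Lemma simplexP (C : Cat) (X : Simplex C) :
  is_simplex X <-> forall i, i < dim X -> src (arrow X i.+1) = vertex X i.
Proof.
rewrite /is_simplex (chainP _ _ (idc (sv0 X))).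
by split => H i Hi; move: (H i Hi); case: i {Hi}.
Qed.

Lemma spanS (C : Cat) (X : Simplex C) a c : a <= c ->
  span X a c.+1 = cmp (arrow X c.+1) (span X a c).
Proof.
move=> h; rewrite /span subSn //=. by rewrite addnS subnKC.
Qed.

Lemma span0 (C : Cat) (X : Simplex C) a : span X a a = idc (vertex X a).
Proof. by rewrite /span subnn. Qed.

Lemma span_srctgt (C : Cat) (X : Simplex C) a b : is_simplex X -> a <= b -> b <= dim X ->
  src (span X a b) = vertex X a /\ tgt (span X a b) = vertex X b.
Proof.
move=> /simplexP HX hab; elim: b hab => [|b IH] hab hb.
  have -> : a = 0 by lia. by rewrite span0 src_id tgt_id.
case: (ltnP b a) => hba.
  have -> : a = b.+1 by lia. by rewrite span0 src_id tgt_id.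
have [h1 h2] := IH hba (ltnW hb).
rewrite spanS // src_comp ?tgt_comp //; rewrite h2 HX //.
Qed.

Lemma span_comp (C : Cat) (X : Simplex C) a b c : is_simplex X -> a <= b -> b <= c -> c <= dim X ->
  span X a c = cmp (span X b c) (span X a b).
Proof.
move=> HX hab; elim: c => [|c IH] hbc hc.
  have -> : b = 0 by lia. have -> : a = 0 by lia.
  by rewrite span0; have := comp_id_l (idc (vertex X 0)); rewrite tgt_id => ->.
case: (ltnP c b) => hcb.
  have E : b = c.+1 by lia. subst b. rewrite span0.
  have [_ <-] := span_srctgt HX hab hc. by rewrite comp_id_l.
have [h1 h2] := span_srctgt HX hab (leq_trans hcb (ltnW hc)).
have [h3 h4] := span_srctgt HX hcb (ltnW hc).
rewrite spanS ?(leq_trans hab) // spanS // IH ?(ltnW hc) // comp_assoc //.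
  by rewrite h2 h3.
by rewrite h4; move/simplexP: HX => ->.
Qed.

Lemma span1 (C : Cat) (X : Simplex C) a : is_simplex X -> a < dim X ->
  span X a a.+1 = arrow X a.+1.
Proof.
move=> HX ha; rewrite spanS // span0.
have <- : src (arrow X a.+1) = vertex X a by move/simplexP: HX => ->.
by rewrite comp_id_r.
Qed.

Lemma size_sprec (C : Cat) (Y : Simplex C) xi n : dim (sprec Y xi n) = n.
Proof. by rewrite /dim /sprec /= size_map size_iota. Qed.

Lemma arrow_sprec (C : Cat) (Y : Simplex C) xi n i : i < n ->
  arrow (sprec Y xi n) i.+1 = span Y (xi i) (xi i.+1).
Proof. move=> h; by rewrite /arrow /= (nth_map 0) ?size_iota // nth_iota. Qed.

Lemma vertex_sprec (C : Cat) (Y : Simplex C) xi n i : is_simplex Y -> ordmap n (dim Y) xi ->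
  i <= n -> vertex (sprec Y xi n) i = vertex Y (xi i).
Proof.
move=> HY [mo bd]; case: i => [|j] //= hj.
rewrite arrow_sprec //.
by have [_ ->] := span_srctgt HY (mo j j.+1 (leqnSn j) hj) (bd _ hj).
Qed.

Lemma sprec_simplex (C : Cat) (Y : Simplex C) xi n : is_simplex Y -> ordmap n (dim Y) xi ->
  is_simplex (sprec Y xi n).
Proof.
move=> HY om; have [mo bd] := om; apply/simplexP; rewrite size_sprec => i hi.
rewrite arrow_sprec // vertex_sprec // ?(ltnW hi) //.
by have [-> _] := span_srctgt HY (mo i i.+1 (leqnSn i) hi) (bd _ hi).
Qed.

Lemma span_sprec (C : Cat) (Y : Simplex C) xi n a b : is_simplex Y -> ordmap n (dim Y) xi ->
  a <= b -> b <= n -> span (sprec Y xi n) a b = span Y (xi a) (xi b).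
Proof.
move=> HY om; have [mo bd] := om; elim: b => [|b IH] hab hb.
  have E : a = 0 by lia. subst a. by rewrite !span0 vertex_sprec.
case: (ltnP b a) => hba.
  have E : a = b.+1 by lia. subst a. by rewrite !span0 vertex_sprec.
rewrite spanS // IH ?(ltnW hb) // arrow_sprec //.
rewrite [RHS](span_comp HY (b := xi b)) //; try apply: mo => //; try lia.
by apply: bd.
Qed.

Lemma sprec_comp (C : Cat) (Y : Simplex C) xi eta m n : is_simplex Y ->
  ordmap m (dim Y) xi -> ordmap n m eta ->
  sprec (sprec Y xi m) eta n = sprec Y (xi \o eta) n.
Proof.
move=> HY om [mo bd].
change (Smp (vertex (sprec Y xi m) (eta 0)) [seq span (sprec Y xi m) (eta i) (eta i.+1) | i <- iota 0 n] = sprec Y (xi \o eta) n).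
rewrite vertex_sprec //; last by apply: bd.
congr Smp; apply/eq_in_map => i; rewrite mem_iota add0n => /andP [_ hi].
rewrite span_sprec //; try apply: mo; try apply: bd; try lia.
Qed.

Lemma sprec_eq (C : Cat) (Y : Simplex C) a b n :
  vertex Y (a 0) = vertex Y (b 0) ->
  (forall i, i < n -> span Y (a i) (a i.+1) = span Y (b i) (b i.+1)) ->
  sprec Y a n = sprec Y b n.
Proof.
move=> h0 h; rewrite /sprec h0; congr Smp; apply/eq_in_map => i.
rewrite mem_iota add0n => /andP [_ hi]; exact: h.
Qed.

Lemma sprec_id (C : Cat) (Y : Simplex C) : is_simplex Y -> sprec Y (fun i => i) (dim Y) = Y.
Proof.
move=> HY; case: Y HY => v s HY; rewrite /sprec /=; congr Smp.
rewrite -{3}(mkseq_nth (idc v) s); apply/eq_in_map => i.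
rewrite mem_iota add0n => /andP [_ hi]; by rewrite span1.
Qed.

Lemma ordmap_comp p q r xi eta : ordmap p q xi -> ordmap q r eta -> ordmap p r (eta \o xi).
Proof.
move=> [m1 b1] [m2 b2]; split => [i j hij hj|i hi] /=.
  apply: m2; [exact: m1 | exact: b1].
apply: b2; exact: b1.
Qed.

Lemma is_mor_comp (C : Cat) (X Y Z : Simplex C) xi eta :
  is_mor X Y xi -> is_mor Y Z eta -> is_mor X Z (eta \o xi).
Proof.
move=> [HX HY o1 E1] [_ HZ o2 E2]; split => //; first exact: ordmap_comp o1 o2.
by rewrite -(sprec_comp (m := dim Y)) // E2.
Qed.

Lemma ordmap_ext p q xi xi' : ordmap p q xi -> (forall i, i <= p -> xi i = xi' i) ->
  ordmap p q xi'.
Proof.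
move=> [m b] h; split => [i j hij hj|i hi]; rewrite -!h //; try lia; by apply: m || apply: b.
Qed.

Lemma is_mor_ext (C : Cat) (X Y : Simplex C) xi xi' :
  is_mor X Y xi -> (forall i, i <= dim X -> xi i = xi' i) -> is_mor X Y xi'.
Proof.
move=> [HX HY o E] h; split => //; first exact: ordmap_ext h.
rewrite -{2}E; apply: sprec_eq => [|i hi]; rewrite ?h //; lia.
Qed.

Lemma elem_mor (C : Cat) (X : Simplex C) s d :
  is_simplex X -> ordmap (dim X).+1 (dim X) s ->
  ordmap (dim X) (dim X).+1 d -> (forall j, j <= dim X -> s (d j) = j) ->
  is_mor X (sprec X s (dim X).+1) d.
Proof.
move=> HX os od hsd; split => //; first exact: sprec_simplex.
  by rewrite size_sprec.
rewrite sprec_comp //; rewrite -[in RHS](sprec_id HX); apply: sprec_eq => [|i hi] /=.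
  by rewrite hsd.
by rewrite !hsd //; lia.
Qed.

Lemma sim_mor (C : Cat) (X Y : Simplex C) xi xi' : sim X Y xi xi' ->
  is_mor X Y xi /\ is_mor X Y xi'.
Proof.
elim=> {X Y xi xi'}.
- move=> X Y xi xi' H h; split => //; exact: is_mor_ext h.
- move=> X s d d' HX os _ od hd od' hd'; split; exact: elem_mor.
- by move=> X Y xi xi' _ [].
- by move=> X Y xi1 xi2 xi3 _ [? _] _ [_ ?].
- move=> X Y Z xi xi' eta _ [h1 h2] he; split; [exact: is_mor_comp h1 he | exact: is_mor_comp h2 he].
- move=> W X Y eta xi xi' he _ [h1 h2]; split; [exact: is_mor_comp he h1 | exact: is_mor_comp he h2].
Qed.

Lemma sim_refl (C : Cat) (X Y : Simplex C) xi : is_mor X Y xi -> sim X Y xi xi.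
Proof. move=> h; exact: sim_ext. Qed.

Lemma sim_extR (C : Cat) (X Y : Simplex C) xi xi' xi'' : sim X Y xi xi' ->
  (forall i, i <= dim X -> xi' i = xi'' i) -> sim X Y xi xi''.
Proof.
move=> h e; have [_ h2] := sim_mor h; apply: (sim_trans h); exact: sim_ext.
Qed.

Lemma sim_extL (C : Cat) (X Y : Simplex C) xi xi' xi'' : sim X Y xi' xi ->
  (forall i, i <= dim X -> xi' i = xi'' i) -> sim X Y xi'' xi.
Proof. move=> h e; apply: sim_sym; apply: sim_extR e; exact: sim_sym. Qed.

Lemma nth_map_f (A B : Type) (f : A -> B) x0 s n : nth (f x0) (map f s) n = f (nth x0 s n).
Proof. by elim: s n => [|x s IH] [|n] //=. Qed.

Lemma dim_fmap (C D : Cat) (F : Functor C D) X : dim (fmapS F X) = dim X.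
Proof. by rewrite /dim /= size_map. Qed.

Lemma arrow_fmap (C D : Cat) (F : Functor C D) X i : arrow (fmapS F X) i = farr F (arrow X i).
Proof. by rewrite /arrow /= -f_id nth_map_f. Qed.

Lemma vertex_fmap (C D : Cat) (F : Functor C D) X i : vertex (fmapS F X) i = fob F (vertex X i).
Proof. by case: i => [|i] //=; rewrite arrow_fmap f_tgt. Qed.

Lemma fmap_simplex (C D : Cat) (F : Functor C D) X : is_simplex X -> is_simplex (fmapS F X).
Proof.
move/simplexP=> H; apply/simplexP; rewrite dim_fmap => i hi.
by rewrite arrow_fmap vertex_fmap f_src H.
Qed.

Lemma span_fmap (C D : Cat) (F : Functor C D) X a b : is_simplex X -> a <= b -> b <= dim X ->
  span (fmapS F X) a b = farr F (span X a b).
Proof.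
move=> HX; elim: b => [|b IH] hab hb.
  have E : a = 0 by lia. subst a. by rewrite !span0 vertex_fmap f_id.
case: (ltnP b a) => hba.
  have E : a = b.+1 by lia. subst a. by rewrite !span0 vertex_fmap f_id.
rewrite !spanS // IH ?(ltnW hb) // arrow_fmap f_comp //.
have [_ ->] := span_srctgt HX hba (ltnW hb). by move/simplexP: HX => ->.
Qed.

Lemma fmap_sprec (C D : Cat) (F : Functor C D) Y xi n : is_simplex Y -> ordmap n (dim Y) xi ->
  fmapS F (sprec Y xi n) = sprec (fmapS F Y) xi n.
Proof.
move=> HY [mo bd]; rewrite /fmapS /sprec /= -map_comp vertex_fmap; congr Smp.
apply/eq_in_map => i; rewrite mem_iota add0n => /andP [_ hi] /=.
rewrite span_fmap //; try apply: mo; try apply: bd; lia.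
Qed.

Lemma fmap_mor (C D : Cat) (F : Functor C D) X Y xi : is_mor X Y xi ->
  is_mor (fmapS F X) (fmapS F Y) xi.
Proof.
move=> [HX HY o E]; split; try exact: fmap_simplex; rewrite ?dim_fmap //.
by rewrite -fmap_sprec // E.
Qed.

Lemma sim_fmap (C D : Cat) (F : Functor C D) X Y xi xi' : sim X Y xi xi' ->
  sim (fmapS F X) (fmapS F Y) xi xi'.
Proof.
elim=> {X Y xi xi'}.
- move=> X Y xi xi' H h; apply: sim_ext; first exact: fmap_mor.
  by rewrite dim_fmap.
- move=> X s d d' HX os sur od hd od' hd'.
  rewrite fmap_sprec // -(dim_fmap F X).
  apply: sim_elem; rewrite ?dim_fmap //; exact: fmap_simplex.
- move=> *; exact: sim_sym.
- move=> *; apply: sim_trans; eassumption.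
- move=> X Y Z xi xi' eta _ h he; apply: sim_postcomp h _; exact: fmap_mor.
- move=> W X Y eta xi xi' he _ h; apply: sim_precomp _ h; exact: fmap_mor.
Qed.

Lemma idbP (C : Cat) (f : Arr C) : reflect (is_id f) (idb f).
Proof. rewrite /idb; case: excluded_middle_informative => h; by constructor. Qed.

Lemma alpha0 (C : Cat) (X : Simplex C) : alpha X 0 = 0.
Proof. by rewrite /alpha take0. Qed.

Lemma alphaS (C : Cat) (X : Simplex C) i : i < dim X ->
  alpha X i.+1 = alpha X i + ~~ idb (arrow X i.+1).
Proof.
move=> hi; rewrite /alpha (take_nth (idc (sv0 X))) // -cats1 count_cat /=.
by rewrite addn0.
Qed.

Lemma count_take_mono (T : Type) (p : pred T) s i j : i <= j ->
  count p (take i s) <= count p (take j s).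
Proof.
elim: s i j => [|x s IH] [|i] [|j] //= h.
by rewrite leq_add2l IH.
Qed.

Lemma alpha_mono (C : Cat) (X : Simplex C) i j : i <= j -> alpha X i <= alpha X j.
Proof. exact: count_take_mono. Qed.

Lemma dim_rS (C : Cat) (X : Simplex C) : dim (rS X) = alpha X (dim X).
Proof. by rewrite /dim /alpha /= take_size size_filter. Qed.

Lemma alpha_le (C : Cat) (X : Simplex C) i : alpha X i <= dim (rS X).
Proof.
rewrite dim_rS /alpha; case: (leqP i (dim X)) => h; first exact: count_take_mono.
by rewrite take_oversize ?take_size //; apply: ltnW.
Qed.

Lemma nth_filter_count (T : Type) (p : pred T) x0 s i : i < size s -> p (nth x0 s i) ->
  nth x0 (filter p s) (count p (take i s)) = nth x0 s i.
Proof.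
elim: s i => [|x s IH] [|i] //= hi.
  by move=> ->.
move=> hp; case: (p x) => /=; last exact: IH.
exact: IH.
Qed.

Lemma arrow_rS (C : Cat) (X : Simplex C) i : i < dim X -> ~~ idb (arrow X i.+1) ->
  arrow (rS X) (alpha X i).+1 = arrow X i.+1.
Proof. move=> hi hp; exact: nth_filter_count. Qed.

Lemma rS_simplex (C : Cat) (X : Simplex C) : is_simplex X -> is_simplex (rS X).
Proof.
rewrite /is_simplex /rS /=; elim: (sarr X) (sv0 X) => [|f s IH] a //= [hs hc].
case: idbP => [[b Eb]|_] /=; last by split => //; apply: IH.
apply: IH; move: hc hs; rewrite Eb tgt_id src_id => hc <-; exact: hc.
Qed.

Lemma vertex_rS (C : Cat) (X : Simplex C) i : is_simplex X -> i <= dim X ->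
  vertex (rS X) (alpha X i) = vertex X i.
Proof.
move=> HX; elim: i => [|i IH] hi; first by rewrite alpha0.
rewrite alphaS //; case: idbP => [[b Eb]|hn] /=.
  rewrite addn0 IH ?(ltnW hi) //; move/simplexP: HX => /(_ i hi).
  by rewrite Eb src_id tgt_id => ->.
rewrite addn1 /= arrow_rS //; by apply/idbP.
Qed.

Lemma alpha_const (C : Cat) (X : Simplex C) a b : is_simplex X -> a <= b -> b <= dim X ->
  alpha X a = alpha X b -> span X a b = idc (vertex X a) /\ vertex X b = vertex X a.
Proof.
move=> HX; elim: b => [|b IH] hab hb.
  have E : a = 0 by lia. subst a. by rewrite span0.
case: (ltnP b a) => hba.
  have E : a = b.+1 by lia. subst a. by rewrite span0.
rewrite alphaS // => he.
have m1 := alpha_mono X hba.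
have h1 : alpha X a = alpha X b by move: he m1; case: (~~ _); lia.
have [IH1 IH2] := IH hba (ltnW hb) h1.
have : idb (arrow X b.+1) by move: he; rewrite h1; case: idb => //=; lia.
move/idbP => [c Ec].
have Hc : c = vertex X b by move/simplexP: HX => /(_ b hb); rewrite Ec src_id.
rewrite spanS // IH1 /= Ec Hc IH2 tgt_id; split => //.
by have := comp_id_l (idc (vertex X a)); rewrite tgt_id.
Qed.

Lemma alpha_step (C : Cat) (X : Simplex C) a b j : a <= b -> b <= dim X ->
  alpha X a <= j < alpha X b -> exists m, [/\ a <= m < b, alpha X m = j & alpha X m.+1 = j.+1].
Proof.
elim: b => [|b IH] hab hb hj.
  have E : a = 0 by lia. subst a. lia.
case: (ltnP b a) => hba.
  have E : a = b.+1 by lia. subst a. lia.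
case: (ltnP j (alpha X b)) => hjb.
  have [m [h1 h2 h3]] := IH hba (ltnW hb) (ltac:(lia)).
  exists m; split => //; lia.
exists b; move: hj; rewrite alphaS //; case: (~~ _) => /=; split; lia.
Qed.

Lemma alpha_mor (C : Cat) (X : Simplex C) : is_simplex X -> is_mor X (rS X) (alpha X).
Proof.
move=> HX; split => //; first exact: rS_simplex.
  split => [i j hij _|i _]; [exact: alpha_mono | exact: alpha_le].
rewrite -[X in _ = X](sprec_id HX) /sprec vertex_rS //; congr Smp.
apply/eq_in_map => i; rewrite mem_iota add0n => /andP [_ hi].
rewrite span1 // alphaS //; case: idbP => [[b Eb]|hn] /=.
  rewrite addn0 span0 vertex_rS ?(ltnW hi) // Eb.
  by move/simplexP: HX => /(_ i hi); rewrite Eb src_id => ->.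
rewrite addn1 span1; first by rewrite arrow_rS //; apply/idbP.
  exact: rS_simplex.
have := alpha_le X i.+1; rewrite alphaS //; case: idbP => //= _; lia.
Qed.

Definition section (C : Cat) (X : Simplex C) (sg : nat -> nat) : Prop :=
  ordmap (dim (rS X)) (dim X) sg /\ forall j, j <= dim (rS X) -> alpha X (sg j) = j.

Lemma section_mor (C : Cat) (X : Simplex C) sg : is_simplex X -> section X sg ->
  is_mor (rS X) X sg.
Proof.
move=> HX [[mo bd] hs]; split => //; first exact: rS_simplex.
have HR := rS_simplex HX.
rewrite -[X in _ = X](sprec_id HR) /sprec.
have := alpha_const HX (leq0n (sg 0)) (bd 0 (leq0n _)); rewrite alpha0 hs // => /(_ erefl) [_ ->].
congr Smp; apply/eq_in_map => j; rewrite mem_iota add0n => /andP [_ hj].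
have h0 : sg j <= sg j.+1 by apply: mo.
have h1 : sg j.+1 <= dim X by apply: bd.
have [m [/andP [hm1 hm2] hm3 hm4]] : exists m, [/\ sg j <= m < sg j.+1, alpha X m = j & alpha X m.+1 = j.+1].
  apply: alpha_step => //; rewrite !hs //; lia.
have hmX : m < dim X by lia.
have -> : span X (sg j) (sg j.+1) = cmp (span X m.+1 (sg j.+1)) (cmp (span X m m.+1) (span X (sg j) m)).
  rewrite -(span_comp HX (a := sg j) (b := m) (c := m.+1)) //; try lia.
  apply: span_comp => //; lia.
have [E1 V1] : span X (sg j) m = idc (vertex X (sg j)) /\ vertex X m = vertex X (sg j).
  apply: alpha_const => //; try lia; rewrite hm3 hs //; lia.
have [E2 V2] : span X m.+1 (sg j.+1) = idc (vertex X m.+1) /\ vertex X (sg j.+1) = vertex X m.+1.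
  apply: alpha_const => //; rewrite hm4 hs //.
have hn : ~~ idb (arrow X m.+1).
  by move: hm4; rewrite alphaS // hm3; case: (~~ _) => //=; lia.
rewrite span1 // E1 E2 -V1 span1 // -hm3 arrow_rS //.
have -> : vertex X m = src (arrow X m.+1) by move/simplexP: HX => ->.
rewrite comp_id_r /=; exact: comp_id_l.
Qed.

Lemma alpha_ivt (C : Cat) (X : Simplex C) b j : b <= dim X -> j <= alpha X b ->
  exists2 i, i <= b & alpha X i = j.
Proof.
move=> hb hj; case: (ltnP j (alpha X b)) => h; last by exists b => //; lia.
have [m [/andP [_ hm] hm1 _]] := @alpha_step C X 0 b j (leq0n _) hb (ltac:(rewrite alpha0; lia)).
exists m => //; lia.
Qed.

Lemma section_exists (C : Cat) (X : Simplex C) : exists sg, section X sg.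
Proof.
pose P j := fun i => (alpha X i == j) || (alpha X (dim X) < j).
have exP : forall j, exists i, P j i.
  move=> j; case: (leqP j (alpha X (dim X))) => h.
    have [i _ hi] := alpha_ivt (leqnn _) h; exists i; by rewrite /P hi eqxx.
  by exists 0; rewrite /P h orbT.
exists (fun j => ex_minn (exP j)).
have key : forall j, j <= dim (rS X) ->
   alpha X (ex_minn (exP j)) = j /\ forall i, alpha X i = j -> ex_minn (exP j) <= i.
  move=> j hj; case: ex_minnP => m; rewrite /P -dim_rS ltnNge hj orbF => /eqP hm hmin.
  split => // i hi; apply: hmin; by rewrite /P hi eqxx.
have bnd : forall j, j <= dim (rS X) -> ex_minn (exP j) <= dim X.
  move=> j hj; have [h1 h2] := key j hj.
  have [i hi hi2] := alpha_ivt (leqnn (dim X)) (ltac:(rewrite -dim_rS; exact: hj)).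
  exact: leq_trans (h2 i hi2) hi.
split; last by move=> j hj; exact: (proj1 (key j hj)).
split => // i j hij hj.
have [hj1 _] := key j hj.
have [k hk hk2] := alpha_ivt (bnd j hj) (ltac:(rewrite hj1; exact: hij)).
apply: leq_trans hk; exact: (proj2 (key i (leq_trans hij hj))).
Qed.

Definition cl (k v : nat) : nat := if v == k.+1 then k else v.

Lemma id_facts (C : Cat) (W : Simplex C) k : is_simplex W -> k < dim W -> is_id (arrow W k.+1) ->
  arrow W k.+1 = idc (vertex W k) /\ vertex W k.+1 = vertex W k.
Proof.
move=> HW hk [b Eb].
have hs : src (arrow W k.+1) = vertex W k by move/simplexP: HW => ->.
move: hs; rewrite Eb src_id => Hb; subst b; split => //. change (tgt (arrow W k.+1) = vertex W k). by rewrite Eb tgt_id.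
Qed.

Lemma vertex_cl (C : Cat) (W : Simplex C) k x : is_simplex W -> k < dim W -> is_id (arrow W k.+1) ->
  vertex W x = vertex W (cl k x).
Proof.
move=> HW hk hid; rewrite /cl; case: eqP => // ->; exact: (proj2 (id_facts HW hk hid)).
Qed.

Lemma span_cl (C : Cat) (W : Simplex C) k x y : is_simplex W -> k < dim W -> is_id (arrow W k.+1) ->
  x <= y -> y <= dim W -> span W x y = span W (cl k x) (cl k y).
Proof.
move=> HW hk hid hxy hy; have [Ha Hv] := id_facts HW hk hid.
have Hs : span W k k.+1 = idc (vertex W k) by rewrite span1.
rewrite /cl; case: eqP => hx; case: eqP => hy2.
- by subst; rewrite !span0 Hv.
- subst x. rewrite (span_comp HW (a := k) (b := k.+1)) //; try lia.
  rewrite Hs -Hv; have [<- _] := span_srctgt HW hxy hy; by rewrite comp_id_r.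
- subst y. rewrite (span_comp HW (b := k)) //; try lia.
  rewrite Hs; have [_ <-] := span_srctgt HW (ltac:(lia) : x <= k) (ltac:(lia)); by rewrite comp_id_l.
- by [].
Qed.

Lemma sprec_cl (C : Cat) (W : Simplex C) k a b n : is_simplex W -> k < dim W -> is_id (arrow W k.+1) ->
  ordmap n (dim W) a -> ordmap n (dim W) b -> (forall i, i <= n -> cl k (a i) = cl k (b i)) ->
  sprec W a n = sprec W b n.
Proof.
move=> HW hk hid [ma ba] [mb bb] h; apply: sprec_eq => [|i hi].
  by rewrite (vertex_cl _ HW hk hid) h // -(vertex_cl _ HW hk hid).
rewrite (span_cl HW hk hid) ?h ?(ltnW hi) //; try lia; try apply: ma; try apply: ba; try lia.
rewrite -(span_cl HW hk hid) //; try apply: mb; try apply: bb; lia.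
Qed.


Ltac notif t := lazymatch t with context [if _ then _ else _] => fail | _ => idtac end.
Ltac crush := repeat (match goal with
  | |- context [if ?a <= ?b then _ else _] => notif a; notif b; case: (leqP a b) => ?
  | |- context [if ?a == ?b then _ else _] => notif a; notif b; case: (@eqP nat a b) => ?
  end); try lia.

Lemma degen_sim (C : Cat) (W : Simplex C) k : is_simplex W -> k < dim W -> is_id (arrow W k.+1) ->
  sim W W (cl k) (fun i => i).
Proof.
move=> HW hk hid; set N := dim W.
pose s2 := fun i => if i <= k.+1 then i else i.-1.
pose e := fun j => if j <= k.+1 then j else j.+1.
pose e' := fun j => if j <= k then j else j.+1.
pose t := fun i => if i <= k then i else i.-1.
have E : sim W (sprec W s2 N.+1) e e'.
  apply: sim_elem => //; rewrite -/N.
  - split => [i j hij hj|i hi]; rewrite /s2; crush.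
  - move=> j hj; exists (e j); rewrite /e /s2; crush.
  - split => [i j hij hj|i hi]; rewrite /e; crush.
  - move=> j hj; rewrite /e /s2; crush.
  - split => [i j hij hj|i hi]; rewrite /e'; crush.
  - move=> j hj; rewrite /e' /s2; crush.
have os2 : ordmap N.+1 N s2.
  split => [i j hij hj|i hi]; rewrite /s2; crush.
have ot : ordmap N.+1 N t.
  split => [i j hij hj|i hi]; rewrite /t; crush.
have Mt : is_mor (sprec W s2 N.+1) W t.
  split => //; first exact: sprec_simplex; rewrite size_sprec //.
  apply: (sprec_cl HW hk hid) => // i hi; rewrite /cl /t /s2.
  crush.
have := sim_postcomp E Mt => H.
apply: (sim_extL (sim_extR H _)) => i hi; rewrite /comp /t /e /e' /cl;
  crush.
Qed.

Lemma nodeg_alpha (C : Cat) (W : Simplex C) : (forall k, k < dim W -> ~ is_id (arrow W k.+1)) ->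
  forall i, i <= dim W -> alpha W i = i.
Proof.
move=> H; elim=> [|i IH] hi; first exact: alpha0.
rewrite alphaS // IH ?(ltnW hi) //; case: idbP => h /=; [by case: (H i hi) | by rewrite addn1].
Qed.

Lemma key_nodeg (C : Cat) (W X : Simplex C) xi xi' :
  (forall k, k < dim W -> ~ is_id (arrow W k.+1)) ->
  is_mor X W xi -> is_mor X W xi' ->
  (forall i, i <= dim X -> alpha W (xi i) = alpha W (xi' i)) -> sim X W xi xi'.
Proof.
move=> H M1 M2 ha; apply: sim_ext => // i hi.
have [_ _ [_ b1] _] := M1; have [_ _ [_ b2] _] := M2.
by rewrite -(nodeg_alpha H (b1 i hi)) -(nodeg_alpha H (b2 i hi)) ha.
Qed.

Lemma key_sim (C : Cat) N : forall (W X : Simplex C) xi xi', dim W <= N -> is_simplex W ->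
  is_mor X W xi -> is_mor X W xi' ->
  (forall i, i <= dim X -> alpha W (xi i) = alpha W (xi' i)) -> sim X W xi xi'.
Proof.
elim: N => [|N IH] W X xi xi' hN HW M1 M2 ha.
  apply: key_nodeg => // k hk; lia.
case: (classic (exists k, k < dim W /\ is_id (arrow W k.+1))) => [[k [hk hid]]|hno]; last first.
  apply: key_nodeg => // k hk hid; apply: hno; by exists k.
move: hk hN hid; case E : (dim W) => [|M] // hk hN hid; rewrite -E in hk hid.
pose d := fun j => if j <= k then j else j.+1.
pose s := fun i => if i <= k then i else i.-1.
pose W' := sprec W d M.
have od : ordmap M (dim W) d by rewrite E; split => [i j hij hj|i hi]; rewrite /d; crush.
have os : ordmap (dim W) M s by rewrite E; split => [i j hij hj|i hi]; rewrite /s; crush.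
have HW' : is_simplex W' by exact: sprec_simplex.
have dW' : dim W' = M by rewrite size_sprec.
have Md : is_mor W' W d by split => //; rewrite dW'.
have Ms : is_mor W W' s.
  split => //; first by rewrite dW'.
  rewrite sprec_comp // -[X in _ = X](sprec_id HW).
  apply: (sprec_cl HW hk hid); [exact: ordmap_comp os od | by split | ].
  move=> i hi; rewrite /comp /cl /d /s; crush.
have arW' : forall j, j < M -> arrow W' j.+1 = arrow W (if j < k then j.+1 else j.+2).
  move=> j hj; rewrite arrow_sprec //.
  have [mo bo] := od.
  rewrite (span_cl HW hk hid) ?mo ?bo //; try lia.
  case: (ltnP j k) => hjk.
    have -> : cl k (d j) = j by rewrite /cl /d; crush.
    have -> : cl k (d j.+1) = j.+1 by rewrite /cl /d; crush.
    rewrite span1 //; lia.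
  have -> : cl k (d j) = cl k j.+1 by rewrite /cl /d; crush.
  have -> : cl k (d j.+1) = cl k j.+2 by rewrite /cl /d; crush.
  rewrite -(span_cl HW hk hid) ?span1 //; lia.
have al : forall i, i <= dim W -> alpha W' (s i) = alpha W i.
  elim=> [|i IHi] hi; first by rewrite /s /= !alpha0.
  rewrite alphaS // -IHi ?(ltnW hi) //.
  case: (ltnP i k) => hik.
    have -> : s i.+1 = (s i).+1 by rewrite /s; crush.
    have -> : s i = i by rewrite /s; crush.
    rewrite alphaS ?dW' ?arW' //; try lia.
    have -> : (i < k) = true by lia.
    by [].
  case: (ltnP k i) => hki.
    have -> : s i.+1 = (s i).+1 by rewrite /s; crush.
    have -> : s i = i.-1 by rewrite /s; crush.
    rewrite alphaS ?dW' ?arW' //; try lia.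
    have -> : (i.-1 < k) = false by lia.
    have -> : i.-1.+2 = i.+1 by lia.
    by [].
  have Eik : i = k by lia. subst i.
  have -> : s k.+1 = s k by rewrite /s; crush.
  by move/idbP: hid => ->; rewrite addn0.
have [HX _ [_ b1] _] := M1; have [_ _ [_ b2] _] := M2.
have S1 : sim X W' (s \o xi) (s \o xi').
  apply: IH; rewrite ?dW' //; try lia; try exact: is_mor_comp M1 Ms; try exact: is_mor_comp M2 Ms.
  move=> i hi /=; rewrite !al ?b1 ?b2 //; exact: ha.
have S2 := sim_postcomp S1 Md.
have D := degen_sim HW hk hid.
have A : forall xi0, is_mor X W xi0 -> sim X W (d \o (s \o xi0)) xi0.
  move=> xi0 M0; have [_ _ [_ b0] _] := M0.
  have := sim_precomp M0 D => H.
  apply: (sim_extL (sim_extR H _)) => i hi //=.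
  have := b0 i hi; rewrite E /cl /d /s; crush.
apply: sim_trans (sim_sym (A _ M1)) _; apply: sim_trans S2 _; exact: A.
Qed.

Lemma In_nth (T : Type) (x0 : T) s n : n < size s -> List.In (nth x0 s n) s.
Proof. elim: s n => [|x s IH] [|n] //= h; [by left | right; exact: IH]. Qed.

Lemma In_filter (T : Type) (p : pred T) s x : List.In x (filter p s) -> p x.
Proof. elim: s => [|y s IH] //=; case: ifP => hy /= ; [case=> [<-|] // | ] ; exact: IH. Qed.

Lemma nondeg_arrow (C : Cat) (W : Simplex C) : nondeg W -> forall k, k < dim W -> ~ is_id (arrow W k.+1).
Proof. move=> [_ H] k hk; apply: H; exact: In_nth. Qed.

Lemma nondeg_rS (C : Cat) (W : Simplex C) : is_simplex W -> nondeg (rS W).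
Proof.
move=> HW; split; first exact: rS_simplex.
move=> f hIn hid; have hf := In_filter hIn; move/idbP: hid => hid; by rewrite hid in hf.
Qed.

Lemma rS_nondeg (C : Cat) (W : Simplex C) : nondeg W -> rS W = W.
Proof.
case: W => v s [_ H]; rewrite /rS /=; congr Smp; move: H => /=.
elim: s => //= f s IH H; case: idbP => h.
  by case: (H f (or_introl erefl)).
by rewrite /= IH // => g hg; apply: H; right.
Qed.

Lemma fmapS_id (C : Cat) (X : Simplex C) : fmapS (Fid C) X = X.
Proof. case: X => v s; rewrite /fmapS /=; congr Smp; by elim: s => //= x s ->. Qed.

Lemma fmap_fcomp (C D E : Cat) (F : Functor C D) (G : Functor D E) X :
  fmapS (Fcomp G F) X = fmapS G (fmapS F X).
Proof. by rewrite /fmapS /= -map_comp. Qed.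

Lemma idb_farr (D E : Cat) (G : Functor D E) f : idb f -> idb (farr G f).
Proof. move/idbP=> [a ->]; apply/idbP; exists (fob G a); exact: f_id. Qed.

Lemma rS_fmap_rS (D E : Cat) (G : Functor D E) V : rS (fmapS G (rS V)) = rS (fmapS G V).
Proof.
rewrite /rS /fmapS /=; congr Smp.
elim: (sarr V) => //= f s IH; case H: (idb f) => /=; last by rewrite IH.
by rewrite (idb_farr G H) /= IH.
Qed.

Lemma alpha_fmap_rS (D E : Cat) (G : Functor D E) V i :
  alpha (fmapS G (rS V)) (alpha V i) = alpha (fmapS G V) i.
Proof.
rewrite /alpha /fmapS /=.
elim: (sarr V) i => [|f s IH] [|i] //=; first by rewrite take0.
case H: (idb f) => /=.
  by rewrite (idb_farr G H) /= IH.
by rewrite IH.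
Qed.

Lemma is_mor_id (C : Cat) (X : Simplex C) : is_simplex X -> is_mor X X (fun i => i).
Proof. move=> HX; split => //; exact: sprec_id. Qed.

Lemma sd_sec (C D : Cat) (F : Functor C D) X sg : sd_section F X sg -> section (fmapS F X) sg.
Proof. by rewrite /section dim_fmap. Qed.

Lemma part1 (C D : Cat) (F : Functor C D) :
     (forall X : Simplex C, nondeg X -> nondeg (rS (fmapS F X))) /\
     (forall X : Simplex C, nondeg X -> exists sg, sd_section F X sg) /\
     (forall (X Y : Simplex C) (xi sg : nat -> nat),
        nondeg X -> nondeg Y -> is_mor X Y xi -> sd_section F X sg ->
        is_mor (rS (fmapS F X)) (rS (fmapS F Y)) (SdMor F Y xi sg)) /\
     (forall (X Y : Simplex C) (xi xi' sg sg' : nat -> nat),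
        nondeg X -> nondeg Y -> sim X Y xi xi' ->
        sd_section F X sg -> sd_section F X sg' ->
        sim (rS (fmapS F X)) (rS (fmapS F Y)) (SdMor F Y xi sg) (SdMor F Y xi' sg')) /\
     (forall (X : Simplex C) (sg : nat -> nat),
        nondeg X -> sd_section F X sg ->
        sim (rS (fmapS F X)) (rS (fmapS F X)) (SdMor F X (fun i => i) sg) (fun i => i)) /\
     (forall (X Y Z : Simplex C) (xi eta sgX sgY : nat -> nat),
        nondeg X -> nondeg Y -> nondeg Z -> is_mor X Y xi -> is_mor Y Z eta ->
        sd_section F X sgX -> sd_section F Y sgY ->
        sim (rS (fmapS F X)) (rS (fmapS F Z))
            (SdMor F Z (eta \o xi) sgX) (SdMor F Z eta sgY \o SdMor F Y xi sgX)).
Proof.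
have morSd : forall (X Y : Simplex C) xi sg, is_simplex X -> is_mor X Y xi -> sd_section F X sg ->
    is_mor (rS (fmapS F X)) (rS (fmapS F Y)) (SdMor F Y xi sg).
  move=> X Y xi sg HX M S.
  have [_ HY _ _] := M.
  have M1 := section_mor (fmap_simplex F HX) (sd_sec S).
  have M2 := is_mor_comp (is_mor_comp M1 (fmap_mor F M)) (alpha_mor (fmap_simplex F HY)).
  exact: is_mor_ext M2 _.
split; first by move=> X [HX _]; apply: nondeg_rS; exact: fmap_simplex.
split.
  move=> X _. have [sg [o h]] := section_exists (fmapS F X).
  by exists sg; rewrite /sd_section -(dim_fmap F X).
split; first by move=> X Y xi sg [HX _] _ M S; exact: morSd.
split.
  move=> X Y xi xi' sg sg' [HX _] [HY _] H S S'.
  have HFX := fmap_simplex F HX; have HFY := fmap_simplex F HY.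
  have S1 := sim_fmap F H.
  have [_ Mxi'] := sim_mor S1.
  have MS := section_mor HFX (sd_sec S); have MS' := section_mor HFX (sd_sec S').
  have Ss : sim (rS (fmapS F X)) (fmapS F X) sg sg'.
    apply: (key_sim (leqnn _)) => // j hj.
    by rewrite (proj2 (sd_sec S)) ?(proj2 (sd_sec S')).
  have A := sim_postcomp (sim_precomp MS S1) (alpha_mor HFY).
  have B := sim_postcomp (sim_postcomp Ss Mxi') (alpha_mor HFY).
  have AB := sim_trans A B.
  by apply: (sim_extL (sim_extR AB _)).
split.
  move=> X sg [HX _] S.
  apply: sim_ext => [|j hj]; first exact: morSd (is_mor_id HX) S.
  exact: (proj2 (sd_sec S)).
move=> X Y Z xi eta sgX sgY [HX _] [HY _] [HZ _] Mxi Meta SX SY.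
have HFX := fmap_simplex F HX; have HFY := fmap_simplex F HY; have HFZ := fmap_simplex F HZ.
have MSY := section_mor HFY (sd_sec SY).
have K : sim (fmapS F Y) (fmapS F Y) (sgY \o alpha (fmapS F Y)) (fun i => i).
  apply: (key_sim (leqnn _)) => //.
  - exact: is_mor_comp (alpha_mor HFY) MSY.
  - exact: is_mor_id.
  - move=> i hi /=; rewrite (proj2 (sd_sec SY)) //; exact: alpha_le.
have M1 : is_mor (rS (fmapS F X)) (fmapS F Y) (xi \o sgX).
  exact: is_mor_comp (section_mor HFX (sd_sec SX)) (fmap_mor F Mxi).
have M2 : is_mor (fmapS F Y) (rS (fmapS F Z)) (alpha (fmapS F Z) \o eta).
  exact: is_mor_comp (fmap_mor F Meta) (alpha_mor HFZ).
have H := sim_postcomp (sim_precomp M1 K) M2.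
by apply: sim_sym; apply: (sim_extL (sim_extR H _)).
Qed.

Lemma part2 (C : Cat) :
     (forall X : Simplex C, nondeg X -> rS (fmapS (Fid C) X) = X) /\
     (forall (X Y : Simplex C) (xi sg : nat -> nat),
        nondeg X -> nondeg Y -> is_mor X Y xi -> sd_section (Fid C) X sg ->
        sim X Y (SdMor (Fid C) Y xi sg) xi).
Proof.
split; first by move=> X h; rewrite fmapS_id rS_nondeg.
move=> X Y xi sg NX NY M [[_ bd] hs].
apply: sim_sym; apply: sim_ext => // i hi.
move: bd hs; rewrite /SdMor !fmapS_id (rS_nondeg NX) => bd hs.
have E : sg i = i by rewrite -{2}(hs i hi) (nodeg_alpha (nondeg_arrow NX)) ?bd.
have [_ _ [_ bx] _] := M.
by rewrite E (nodeg_alpha (nondeg_arrow NY)) ?bx.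
Qed.

Lemma part3 (C D E : Cat) (F : Functor C D) (G : Functor D E) :
     (forall X : Simplex C, nondeg X ->
        rS (fmapS (Fcomp G F) X) = rS (fmapS G (rS (fmapS F X)))) /\
     (forall (X Y : Simplex C) (xi sg sg1 sg2 : nat -> nat),
        nondeg X -> nondeg Y -> is_mor X Y xi ->
        sd_section (Fcomp G F) X sg -> sd_section F X sg1 ->
        sd_section G (rS (fmapS F X)) sg2 ->
        sim (rS (fmapS (Fcomp G F) X)) (rS (fmapS (Fcomp G F) Y))
            (SdMor (Fcomp G F) Y xi sg)
            (SdMor G (rS (fmapS F Y)) (SdMor F Y xi sg1) sg2)).
Proof.
split; first by move=> X _; rewrite fmap_fcomp rS_fmap_rS.
move=> X Y xi sg sg1 sg2 [HX _] [HY _] M S S1 S2.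
set V := fmapS F X.
have HV : is_simplex V := fmap_simplex F HX.
have HW : is_simplex (fmapS (Fcomp G F) X) := fmap_simplex _ HX.
have MS := section_mor HW (sd_sec S).
have MS1 := section_mor HV (sd_sec S1).
have MS2 := section_mor (fmap_simplex G (rS_simplex HV)) (sd_sec S2).
have Mt := is_mor_comp MS2 (fmap_mor G MS1).
rewrite rS_fmap_rS -fmap_fcomp in Mt.
have K : sim (rS (fmapS (Fcomp G F) X)) (fmapS (Fcomp G F) X) sg (sg1 \o sg2).
  apply: (key_sim (leqnn _)) => // j hj.
  rewrite (proj2 (sd_sec S)) //= fmap_fcomp -alpha_fmap_rS.
  have [[_ b2] h2] := sd_sec S2.
  rewrite fmap_fcomp -rS_fmap_rS in hj.
  rewrite (proj2 (sd_sec S1)) ?h2 //.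
  by move: (b2 j hj); rewrite dim_fmap.
have H := sim_postcomp (sim_postcomp K (fmap_mor (Fcomp G F) M))
             (alpha_mor (fmap_simplex (Fcomp G F) HY)).
apply: (sim_extL (sim_extR H _)) => // i hi /=.
by rewrite /SdMor fmap_fcomp -alpha_fmap_rS.
Qed.

Theorem lemma23 :
  (forall (C D : Cat) (F : Functor C D),
     (forall X : Simplex C, nondeg X -> nondeg (rS (fmapS F X))) /\
     (forall X : Simplex C, nondeg X -> exists sg, sd_section F X sg) /\
     (forall (X Y : Simplex C) (xi sg : nat -> nat),
        nondeg X -> nondeg Y -> is_mor X Y xi -> sd_section F X sg ->
        is_mor (rS (fmapS F X)) (rS (fmapS F Y)) (SdMor F Y xi sg)) /\
     (forall (X Y : Simplex C) (xi xi' sg sg' : nat -> nat),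
        nondeg X -> nondeg Y -> sim X Y xi xi' ->
        sd_section F X sg -> sd_section F X sg' ->
        sim (rS (fmapS F X)) (rS (fmapS F Y)) (SdMor F Y xi sg) (SdMor F Y xi' sg')) /\
     (forall (X : Simplex C) (sg : nat -> nat),
        nondeg X -> sd_section F X sg ->
        sim (rS (fmapS F X)) (rS (fmapS F X)) (SdMor F X (fun i => i) sg) (fun i => i)) /\
     (forall (X Y Z : Simplex C) (xi eta sgX sgY : nat -> nat),
        nondeg X -> nondeg Y -> nondeg Z -> is_mor X Y xi -> is_mor Y Z eta ->
        sd_section F X sgX -> sd_section F Y sgY ->
        sim (rS (fmapS F X)) (rS (fmapS F Z))
            (SdMor F Z (eta \o xi) sgX) (SdMor F Z eta sgY \o SdMor F Y xi sgX)))
  /\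
  (forall C : Cat,
     (forall X : Simplex C, nondeg X -> rS (fmapS (Fid C) X) = X) /\
     (forall (X Y : Simplex C) (xi sg : nat -> nat),
        nondeg X -> nondeg Y -> is_mor X Y xi -> sd_section (Fid C) X sg ->
        sim X Y (SdMor (Fid C) Y xi sg) xi))
  /\
  (forall (C D E : Cat) (F : Functor C D) (G : Functor D E),
     (forall X : Simplex C, nondeg X ->
        rS (fmapS (Fcomp G F) X) = rS (fmapS G (rS (fmapS F X)))) /\
     (forall (X Y : Simplex C) (xi sg sg1 sg2 : nat -> nat),
        nondeg X -> nondeg Y -> is_mor X Y xi ->
        sd_section (Fcomp G F) X sg -> sd_section F X sg1 ->
        sd_section G (rS (fmapS F X)) sg2 ->
        sim (rS (fmapS (Fcomp G F) X)) (rS (fmapS (Fcomp G F) Y))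
            (SdMor (Fcomp G F) Y xi sg)
            (SdMor G (rS (fmapS F Y)) (SdMor F Y xi sg1) sg2))).
Proof.
split; first exact: part1.
split; first exact: part2.
exact: part3.
Qed.
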